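(* Let $\mu$ be a probability measure on $\mathrm{Homeo}_+(\mathbb{R})$ with finite or countable support having the shiftability property. Then for every $x\in\mathbb{R}$, almost surely both $\limsup_{n\to\infty}F_n(x)$ and $\liminf_{n\to\infty}F_n(x)$ belong to $\{-\infty,+\infty\}$.
   Context: Setup. Let $\mu$ be a probability measure on the group $\mathrm{Homeo}_+(\mathbb{R})$ of orientation-preserving homeomorphisms of $\mathbb{R}$, supported on a finite or countable set $\{f_1,f_2,\dots\}$ with $p_i=\mu(\{f_i\})>0$, $\sum_i p_i=1$. Let $g_1,g_2,\dots$ be i.i.d. random maps with law $\mu$, and set $F_0=\mathrm{id}$, $F_n=g_n\circ\cdots\circ g_1$. The system has the shiftability property if for every $x\in\mathbb{R}$ there exist $f,g$ with $\mu(\{f\})>0$, $\mu(\{g\})>0$ and $g(x)<x<f(x)$. *)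

(* Defs.v *)
From HB Require Import structures.
From mathcomp Require Import all_boot all_order all_algebra.
From mathcomp Require Import all_classical all_reals all_analysis.
Set Implicit Arguments. Unset Strict Implicit. Unset Printing Implicit Defensive.
Import Order.TTheory GRing.Theory Num.Theory.
Import numFieldNormedType.Exports.
Local Open Scope classical_set_scope.
Local Open Scope ring_scope.

Definition homeo_plus (R : realType) (f : R -> R) : Prop :=
  continuous f /\ (forall x y : R, x < y -> f x < f y) /\
  exists g : R -> R, continuous g /\ cancel f g /\ cancel g f.

(* F_n(x) = g_n o ... o g_1 (x), where g_{k+1} = f (X k w) *)
Fixpoint Fn (R : realType) (T : Type) (f : nat -> R -> R) (X : nat -> T -> nat)
    (n : nat) (w : T) (x : R) : R :=
  match n with
  | 0%N => x
  | m.+1 => f (X m w) (Fn f X m w x)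
  end.

(* The random indices X 0, X 1, ... are i.i.d. with law p on nat:
   the joint law of (X 0, ..., X (n-1)) is the product law. *)
Definition iid_law (d : measure_display) (T : measurableType d) (R : realType)
    (P : probability T R) (X : nat -> T -> nat) (p : nat -> R) : Prop :=
  (forall k i, measurable (X k @^-1` [set i])) /\
  forall (n : nat) (s : nat -> nat),
    P [set w | forall k, (k < n)%N -> X k w = s k] = (\prod_(k < n) p (s k))%:E.

(* Main.v *)
Require Import Defs.
From HB Require Import structures.
From mathcomp Require Import all_boot all_order all_algebra.
From mathcomp Require Import all_classical all_reals all_analysis.
From mathcomp Require Import lra.
Import Order.TTheory GRing.Theory Num.Theory.
Import numFieldNormedType.Exports.
Local Open Scope classical_set_scope.
Local Open Scope ring_scope.

Lemma cont_lt (R : realType) (g : R -> R) (a c : R) :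
  continuous g -> g a < c -> exists2 e : R, 0 < e & forall y, `|a - y| < e -> g y < c.
Proof.
move=> hg gac; have := @cvgr_lt _ _ _ _ g (g a) (hg a) c gac.
move=> H; have [e /= e0 He] := iffLR (nbhs_ballP _ _) (H _); exists e => // y hy; apply: He.
Qed.

Lemma cont_gt (R : realType) (g : R -> R) (a c : R) :
  continuous g -> c < g a -> exists2 e : R, 0 < e & forall y, `|a - y| < e -> c < g y.
Proof.
move=> hg gac; have := @cvgr_gt _ _ _ _ g (g a) (hg a) c gac.
move=> H; have [e /= e0 He] := iffLR (nbhs_ballP _ _) (H _); exists e => // y hy; apply: He.
Qed.

Lemma rat_below (R : realType) (g : R -> R) (a c : R) :
  continuous g -> c < g a -> exists q : rat, ratr q < a /\ c < g (ratr q).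
Proof.
move=> hg /(cont_gt _ _ _ _ hg) [e e0 He].
have [q] := @rat_in_itvoo R (a - e) a ltac:(by rewrite ltrBlDr ltrDl).
rewrite in_itv /= => /andP[h1 h2]; exists q; split => //; apply: He.
rewrite ger0_norm ?subr_ge0 ?ltW // ltrBlDr addrC -ltrBlDr //.
Qed.

Lemma rat_above (R : realType) (g : R -> R) (a c : R) :
  continuous g -> g a < c -> exists q : rat, a < ratr q /\ g (ratr q) < c.
Proof.
move=> hg /(cont_lt _ _ _ _ hg) [e e0 He].
have [q] := @rat_in_itvoo R a (a + e) ltac:(by rewrite ltrDl).
rewrite in_itv /= => /andP[h1 h2]; exists q; split => //; apply: He.
rewrite distrC ger0_norm ?subr_ge0 ?ltW // ltrBlDl //.
Qed.
Definition dep (n : nat) (Q : (nat -> nat) -> Prop) :=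
  forall s t, (forall k, (k < n)%N -> s k = t k) -> (Q s <-> Q t).

Definition upd (s : nat -> nat) (n j : nat) : nat -> nat :=
  fun k => if k == n then j else s k.

Lemma dep_upd n Q j : dep n.+1 Q -> dep n (fun s => Q (upd s n j)).
Proof.
move=> hQ s t hst; apply: hQ => k; rewrite ltnS /upd.
by case: eqP => // /eqP kn kn1; apply: hst; rewrite ltn_neqAle kn kn1.
Qed.

Lemma upd_id n Q (s : nat -> nat) : dep n.+1 Q -> (Q s <-> Q (upd s n (s n))).
Proof. by move=> hQ; apply: hQ => k _; rewrite /upd; case: eqP => // ->. Qed.

Lemma dep0 Q s t : dep 0 Q -> (Q s <-> Q t).
Proof. by move=> hQ; apply: hQ. Qed.

Lemma meas_dep d (T : measurableType d) (X : nat -> T -> nat)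
  (hXm : forall k i, measurable (X k @^-1` [set i])) n :
  forall Q, dep n Q -> measurable [set w | Q (fun k => X k w)].
Proof.
elim: n => [|n IH] Q hQ.
  have [q|nq] := pselect (Q (fun _ => 0%N)).
    suff -> : [set w | Q (fun k => X k w)] = setT by exact: measurableT.
    by apply/seteqP; split => // w _; exact: ((dep0 _ _ _ hQ).1 q).
  suff -> : [set w | Q (fun k => X k w)] = set0 by exact: measurable0.
  by apply/seteqP; split => // w /= /((dep0 _ _ (fun _ => 0%N) hQ).1).
suff -> : [set w | Q (fun k => X k w)] =
   \bigcup_j (X n @^-1` [set j] `&` [set w | Q (upd (fun k => X k w) n j)]).
  apply: bigcupT_measurable => j; apply: measurableI => //.
  exact: (IH _ (dep_upd _ _ j hQ)).
apply/seteqP; split => w /=.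
  move=> h; exists (X n w) => //; split => //=; exact: ((upd_id _ _ _ hQ).1 h).
by move=> [j _ [/= <- h]]; exact: ((upd_id _ _ _ hQ).2 h).
Qed.

Lemma dep_mono n m Q : dep n Q -> (n <= m)%N -> dep m Q.
Proof. by move=> hQ nm s t h; apply: hQ => k kn; apply: h; exact: leq_trans kn nm. Qed.

Lemma dep_and n Q1 Q2 : dep n Q1 -> dep n Q2 -> dep n (fun s => Q1 s /\ Q2 s).
Proof.
move=> h1 h2 s t h; split => -[a b].
  by split; [exact: ((h1 _ _ h).1 a)|exact: ((h2 _ _ h).1 b)].
by split; [exact: ((h1 _ _ h).2 a)|exact: ((h2 _ _ h).2 b)].
Qed.

Lemma dep_cyl n L (t : nat -> nat) :
  dep (n + L) (fun s => forall k, (k < L)%N -> s (n + k)%N = t k).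
Proof.
move=> s u h; split => H k kL; rewrite -H //.
  by rewrite h // ltn_add2l.
by rewrite h // ltn_add2l.
Qed.

Definition ncons (j : nat) (t : nat -> nat) : nat -> nat :=
  fun k => if k is k'.+1 then t k' else j.

Lemma indep_gen d (T : measurableType d) (R : realType) (P : probability T R)
  (X : nat -> T -> nat) (p : nat -> R) (hX : iid_law P X p)
  (hp0 : forall i, 0 <= p i) n :
  forall Q, dep n Q -> forall L (t : nat -> nat),
  P [set w | Q (fun k => X k w) /\ forall k, (k < L)%N -> X (n + k)%N w = t k] =
  (P [set w | Q (fun k => X k w)] * (\prod_(k < L) p (t k))%:E)%E.
Proof.
have [hXm hXp] := hX.
elim: n => [|n IH] Q hQ L t.
  have [q|nq] := pselect (Q (fun _ => 0%N)).
    have -> : [set w | Q (fun k => X k w)] = setT.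
      by apply/seteqP; split => // w _; exact: ((dep0 _ _ _ hQ).1 q).
    rewrite probability_setT mul1e -hXp; congr (P _).
    apply/seteqP; split => w /=; first by case.
    by move=> h; split => //; exact: ((dep0 _ _ _ hQ).1 q).
  have -> : [set w | Q (fun k => X k w)] = set0.
    by apply/seteqP; split => // w /= /((dep0 _ _ (fun _ => 0%N) hQ).1).
  rewrite measure0 mul0e (_ : [set w | _ /\ _] = set0) ?measure0 //.
  by apply/seteqP; split => // w /= [/((dep0 _ _ (fun _ => 0%N) hQ).1)].
pose Qj j := fun s => Q (upd s n j).
have hQj j : dep n (Qj j) := dep_upd _ _ j hQ.
have decomp : forall L (t : nat -> nat),
  P [set w | Q (fun k => X k w) /\ forall k, (k < L)%N -> X (n.+1 + k)%N w = t k] =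
  (\sum_(j <oo) (P [set w | Qj j (fun k => X k w)] * ((p j)%:E * (\prod_(k < L) p (t k))%:E)))%E.
  move=> L0 t0.
  have -> : [set w | Q (fun k => X k w) /\ forall k, (k < L0)%N -> X (n.+1 + k)%N w = t0 k] =
     \bigcup_j [set w | Qj j (fun k => X k w) /\ forall k, (k < L0.+1)%N -> X (n + k)%N w = ncons j t0 k].
    apply/seteqP; split => w /=.
      move=> [hq hk]; exists (X n w) => //; split.
        exact: ((upd_id _ _ _ hQ).1 hq).
      by case=> [_|k kL]; rewrite /= ?addn0 // addnS -addSn; exact: hk.
    move=> [j _ [hq hk]].
    have xj : X n w = j by have := hk 0%N erefl; rewrite addn0.
    split; first by rewrite -xj in hq; exact: ((upd_id _ _ _ hQ).2 hq).
    by move=> k kL; have := hk k.+1 kL; rewrite /= addnS -addSn.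
  have mF : forall j, measurable [set w | Qj j (fun k => X k w) /\ forall k, (k < L0.+1)%N -> X (n + k)%N w = ncons j t0 k].
    move=> j; apply: (@meas_dep _ _ _ hXm (n + L0.+1)
      (fun s => Qj j s /\ forall k, (k < L0.+1)%N -> s (n + k)%N = ncons j t0 k)).
    apply: dep_and; first exact: dep_mono (hQj j) (leq_addr _ _).
    exact: dep_cyl.
  rewrite measure_semi_bigcup.
  - apply: eq_eseriesr => j _ /=; rewrite (IH (Qj j)) //.
    by rewrite big_ord_recl /= EFinM.
  - exact: mF.
  - move=> i j _ _ [w [[_ hi] [_ hj]]].
    by have := hi 0%N erefl; have := hj 0%N erefl; rewrite /= => h1 h2; rewrite -h1 -h2.
  - by apply: bigcupT_measurable => j; exact: mF.
have hPQ : P [set w | Q (fun k => X k w)] =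
   (\sum_(j <oo) (P [set w | Qj j (fun k => X k w)] * ((p j)%:E * (\prod_(k < 0) p (t k))%:E)))%E.
  rewrite -decomp; congr (P _); apply/seteqP; split => w /=; first by [].
  by case.
rewrite hPQ big_ord0.
under eq_eseriesr do rewrite mule1.
have c0 : 0 <= \prod_(k < L) p (t k) by apply: prodr_ge0 => k _.
transitivity (\sum_(j <oo) ((\prod_(k < L) p (t k))%:E * (P [set w | Qj j (fun k => X k w)] * (p j)%:E)))%E.
  rewrite decomp; apply: eq_eseriesr => j _.
  by rewrite muleA muleC.
rewrite nneseriesZl; first by rewrite muleC.
by move=> j _; apply: mule_ge0 => //; rewrite lee_fin.
Qed.

Lemma indep1 d (T : measurableType d) (R : realType) (P : probability T R)
  (X : nat -> T -> nat) (p : nat -> R) (hX : iid_law P X p)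
  (hp0 : forall i, 0 <= p i) n Q j : dep n Q ->
  P [set w | Q (fun k => X k w) /\ X n w = j] =
  (P [set w | Q (fun k => X k w)] * (p j)%:E)%E.
Proof.
move=> hQ; have := @indep_gen _ _ _ P X p hX hp0 n Q hQ 1 (fun _ => j).
rewrite big_ord1 => <-; congr (P _); apply/seteqP; split => w /= [hq hk]; split => //.
  by case=> // _; rewrite addn0.
by have := hk 0%N erefl; rewrite addn0.
Qed.

Lemma indep_ne d (T : measurableType d) (R : realType) (P : probability T R)
  (X : nat -> T -> nat) (p : nat -> R) (hX : iid_law P X p)
  (hp0 : forall i, 0 <= p i) n Q j : dep n Q ->
  P [set w | Q (fun k => X k w) /\ X n w <> j] =
  (P [set w | Q (fun k => X k w)] * (1 - p j)%:E)%E.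
Proof.
move=> hQ; have hXm := hX.1.
have mA : measurable [set w | Q (fun k => X k w) /\ X n w = j].
  apply: (@meas_dep _ _ _ hXm n.+1 (fun s => Q s /\ s n = j)).
  apply: dep_and; first exact: dep_mono hQ (leqnSn _).
  by move=> s t h; rewrite h.
have mB : measurable [set w | Q (fun k => X k w) /\ X n w <> j].
  apply: (@meas_dep _ _ _ hXm n.+1 (fun s => Q s /\ s n <> j)).
  apply: dep_and; first exact: dep_mono hQ (leqnSn _).
  by move=> s t h; rewrite h.
have mQ : measurable [set w | Q (fun k => X k w)] := @meas_dep _ _ X hXm n Q hQ.
have hU : P [set w | Q (fun k => X k w)] =
   (P [set w | Q (fun k => X k w) /\ X n w = j] + P [set w | Q (fun k => X k w) /\ X n w <> j])%E.
  rewrite -measureU //.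
    congr (P _); apply/seteqP; split => w /=.
      by move=> hq; have [e|ne] := eqVneq (X n w) j; [left|right; split => //; apply/eqP].
    by case=> -[].
  by apply/seteqP; split => // w /= [[_ ->] [_]].
move: hU; rewrite (@indep1 _ _ _ P X p hX hp0 n Q j hQ).
rewrite -(fineK (fin_num_measure P _ mQ)) -(fineK (fin_num_measure P _ mB)).
rewrite -!EFinM -EFinD => -[h].
by congr (_%:E); rewrite mulrBr mulr1; lra.
Qed.
Fixpoint Fs {R : realType} (f : nat -> R -> R) (s : nat -> nat) (n : nat) (x : R) : R :=
  match n with 0%N => x | n'.+1 => f (s n') (Fs f s n' x) end.

Lemma Fn_Fs {R : realType} (T : Type) (f : nat -> R -> R) (X : nat -> T -> nat) n w x :
  Fn f X n w x = Fs f (fun k => X k w) n x.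
Proof. by elim: n => //= n ->. Qed.

Lemma Fs_dep {R : realType} (f : nat -> R -> R) s t n x :
  (forall k, (k < n)%N -> s k = t k) -> forall k, (k <= n)%N -> Fs f s k x = Fs f t k x.
Proof.
move=> h; elim=> //= k IH kn; rewrite h // IH //; exact: ltnW.
Qed.

Definition visit {R : realType} (f : nat -> R -> R) (x u : R) (m : nat) s n : bool :=
  (m <= n)%N && (u <= Fs f s n x).

Fixpoint cnt {R : realType} (f : nat -> R -> R) (x u : R) (m : nat) s n : nat :=
  match n with 0%N => 0%N | n'.+1 => (cnt f x u m s n' + visit f x u m s n')%N end.

Definition okp {R : realType} (f : nat -> R -> R) (x u : R) (m i : nat) s n : Prop :=
  forall k, (k < n)%N -> visit f x u m s k -> s k <> i.

Definition Hq {R : realType} (f : nat -> R -> R) (x u : R) (m i K n : nat) s : Prop :=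
  [/\ okp f x u m i s n, cnt f x u m s n = K & visit f x u m s n].

Lemma visit_dep {R : realType} (f : nat -> R -> R) x u m n s t :
  (forall k, (k < n)%N -> s k = t k) -> forall k, (k <= n)%N ->
  visit f x u m s k = visit f x u m t k.
Proof. by move=> h k kn; rewrite /visit (Fs_dep f s t n x h k kn). Qed.

Lemma cnt_dep {R : realType} (f : nat -> R -> R) x u m n s t :
  (forall k, (k < n)%N -> s k = t k) -> forall k, (k <= n)%N ->
  cnt f x u m s k = cnt f x u m t k.
Proof.
move=> h; elim=> //= k IH kn; rewrite IH ?(ltnW kn) //.
by rewrite (visit_dep f x u m n s t h k (ltnW kn)).
Qed.

Lemma Hq_dep {R : realType} (f : nat -> R -> R) x u m i K n :
  dep n (Hq f x u m i K n).
Proof.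
move=> s t h.
have hv := visit_dep f x u m n s t h; have hc := cnt_dep f x u m n s t h.
rewrite /Hq /okp (hv n (leqnn n)) (hc n (leqnn n)).
split=> -[ok c v]; split => // k kn.
  by rewrite -hv ?(ltnW kn) // -h //; exact: ok.
by rewrite hv ?(ltnW kn) // h //; exact: ok.
Qed.

Lemma cnt_mono {R : realType} (f : nat -> R -> R) x u m s a b :
  (a <= b)%N -> (cnt f x u m s a <= cnt f x u m s b)%N.
Proof.
move=> ab; rewrite -(subnK ab); elim: (b - a)%N => //= k IH.
exact: leq_trans IH (leq_addr _ _).
Qed.

Lemma cnt_last {R : realType} (f : nat -> R -> R) x u m s n :
  (0 < cnt f x u m s n)%N -> exists2 k, (k < n)%N &
  visit f x u m s k /\ cnt f x u m s n = (cnt f x u m s k).+1.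
Proof.
elim: n => //= n IH; case hv: (visit f x u m s n) => /=.
  by move=> _; exists n => //; rewrite addn1.
rewrite addn0 => /IH [k kn hk]; exists k => //; exact: ltnW.
Qed.

Lemma cnt_unbounded {R : realType} (f : nat -> R -> R) x u m s :
  (forall N, exists2 n, (N <= n)%N & visit f x u m s n) ->
  forall K, exists n, (K <= cnt f x u m s n)%N.
Proof.
move=> hinf; elim=> [|K [n hn]]; first by exists 0%N.
have [n' nn' hv] := hinf n; exists n'.+1 => /=; rewrite hv addn1 ltnS.
exact: leq_trans hn (@cnt_mono _ f x u m s _ _ nn').
Qed.

Lemma cnt_hit {R : realType} (f : nat -> R -> R) x u m s :
  (forall N, exists2 n, (N <= n)%N & visit f x u m s n) ->
  forall K, exists n, visit f x u m s n /\ cnt f x u m s n = K.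
Proof.
move=> hinf K; have ex := cnt_unbounded f x u m s hinf K.+1.
case: (ex_minnP ex) => n0 hn0 hmin.
case: n0 hn0 hmin => [|n1] /=; first by [].
move=> hn0 hmin; have h1 : ~~ (K < cnt f x u m s n1)%N.
  by apply/negP => /hmin; rewrite ltnn.
move: hn0 h1; case hv: (visit f x u m s n1) => /=; rewrite -leqNgt.
  by rewrite addn1 ltnS => a b; exists n1; split => //; apply/eqP; rewrite eqn_leq a b.
by rewrite addn0 => a b; move: (leq_trans a b); rewrite ltnn.
Qed.

Lemma limsup_prop {R : realType} (v : nat -> R) (L : R) :
  limn_esup (fun n => (v n)%:E) = L%:E ->
  (forall t, L < t -> exists N, forall n, (N <= n)%N -> v n < t) /\
  (forall u, u < L -> forall N, exists2 n, (N <= n)%N & u < v n).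
Proof.
have hc : esups (fun n => (v n)%:E) @ \oo --> ereal_inf (range (esups (fun n => (v n)%:E))) := @cvg_esups_inf R (fun n => (v n)%:E).
rewrite limn_esup_lim (cvg_lim _ hc) // => hL; split.
  move=> t Lt; have : (ereal_inf (range (esups (fun n => (v n)%:E))) < t%:E)%E.
    by rewrite hL lte_fin.
  move=> /ereal_inf_lt [_ [N _ <-]] hN; exists N => n Nn.
  rewrite -lte_fin; apply: le_lt_trans hN.
  by apply: ereal_sup_ubound; exists n.
move=> u uL N.
have : (u%:E < esups (fun n => (v n)%:E) N)%E.
  apply: lt_le_trans (_ : L%:E <= _)%E; first by rewrite lte_fin.
  by rewrite -hL; apply: ereal_inf_lbound; exists N.
by move=> /ereal_sup_gt [_ [n Nn <-]]; rewrite lte_fin => h; exists n.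
Qed.

Lemma p_le1 d (T : measurableType d) (R : realType) (P : probability T R)
  (X : nat -> T -> nat) (p : nat -> R) (hX : iid_law P X p)
  (hp0 : forall i, 0 <= p i) i : p i <= 1.
Proof.
rewrite -lee_fin; have := hX.2 1%N (fun _ => i); rewrite big_ord1 => <-.
apply: probability_le1.
apply: (@meas_dep _ _ X hX.1 1 (fun s => forall k, (k < 1)%N -> s k = i)).
move=> s t h; split => H k k1; [rewrite -h ?H // | rewrite h ?H //]; exact: leq_trans k1 _.
Qed.

Lemma Hbound d (T : measurableType d) (R : realType) (P : probability T R)
  (X : nat -> T -> nat) (p : nat -> R) (hX : iid_law P X p)
  (hp0 : forall i, 0 <= p i) (f : nat -> R -> R) x u m i K :
  (P (\bigcup_n [set w | Hq f x u m i K n (fun k => X k w)]) <= ((1 - p i) ^+ K)%:E)%E.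
Proof.
have hXm := hX.1.
have mH : forall K n, measurable [set w | Hq f x u m i K n (fun k => X k w)].
  by move=> K0 n; exact: (@meas_dep _ _ X hXm n _ (Hq_dep f x u m i K0 n)).
elim: K => [|K IH].
  by rewrite expr0; apply: probability_le1; apply: bigcupT_measurable.
pose F n := [set w | Hq f x u m i K n (fun k => X k w) /\ X n w <> i].
have mF : forall n, measurable (F n).
  move=> n; apply: (@meas_dep _ _ _ hXm n.+1 (fun s => Hq f x u m i K n s /\ s n <> i)).
  apply: dep_and; first exact: dep_mono (Hq_dep _ _ _ _ _ _ _) (leqnSn _).
  by move=> s t h; rewrite h.
have sub : \bigcup_n [set w | Hq f x u m i K.+1 n (fun k => X k w)] `<=` \bigcup_n F n.
  move=> w [n' _ [ok c v]].
  have := @cnt_last _ f x u m (fun k => X k w) n'; rewrite c => /(_ erefl).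
  move=> [k kn' [vk ck]]; exists k => //; split; last exact: ok.
  split; [|by case: ck|by []].
  by move=> k' k'k; apply: ok; exact: ltn_trans k'k kn'.
apply: le_trans (measure_sigma_subadditive _ mF _ sub) _.
  by apply: bigcupT_measurable.
rewrite (eq_eseriesr (g := fun n => (1 - p i)%:E * P [set w | Hq f x u m i K n (fun k => X k w)])%E); last first.
  by move=> n _; rewrite /F muleC; exact: (@indep_ne _ _ _ P X p hX hp0 n _ i (Hq_dep f x u m i K n)).
rewrite nneseriesZl // -measure_semi_bigcup //; last 2 first.
- move=> a b _ _ [w [[oka ca va] [okb cb vb]]].
  have hlt : forall a b, (a < b)%N -> cnt f x u m (fun k => X k w) a = K ->
      visit f x u m (fun k => X k w) a -> cnt f x u m (fun k => X k w) b = K -> False.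
    move=> a0 b0 ab ca0 va0 cb0.
    have := @cnt_mono _ f x u m (fun k => X k w) _ _ ab.
    by rewrite /= ca0 va0 cb0 addn1 ltnn.
  case: (ltngtP a b) => // ab; [exact: (False_ind _ (hlt _ _ ab ca va cb))|].
  exact: (False_ind _ (hlt _ _ ab cb vb ca)).
- exact: bigcupT_measurable.
rewrite exprS EFinM; apply: lee_wpmul2l => //.
by rewrite lee_fin subr_ge0; exact: (@p_le1 _ _ _ P X p hX hp0 i).
Qed.

Definition Zs d (T : measurableType d) (R : realType) (X : nat -> T -> nat)
  (f : nat -> R -> R) (x u : R) (m i : nat) : set T :=
  \bigcap_K \bigcup_n [set w | Hq f x u m i K n (fun k => X k w)].
Arguments Zs {d T R}.

Lemma Zs_null d (T : measurableType d) (R : realType) (P : probability T R)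
  (X : nat -> T -> nat) (p : nat -> R) (hX : iid_law P X p)
  (hp0 : forall i, 0 <= p i) (f : nat -> R -> R) x u m i : 0 < p i ->
  measurable (Zs X f x u m i) /\ P (Zs X f x u m i) = 0%E.
Proof.
move=> pi0; have hXm := hX.1.
have mH : forall K n, measurable [set w | Hq f x u m i K n (fun k => X k w)].
  by move=> K0 n; exact: (@meas_dep _ _ X hXm n _ (Hq_dep f x u m i K0 n)).
have mZ : measurable (Zs X f x u m i).
  by apply: bigcapT_measurable => K; apply: bigcupT_measurable.
split => //.
have bnd : forall K, (P (Zs X f x u m i) <= ((1 - p i) ^+ K)%:E)%E.
  move=> K; apply: le_trans (@Hbound _ _ _ P X p hX hp0 f x u m i K).
  apply: le_measure; rewrite ?inE //; first exact: bigcupT_measurable.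
  by move=> w; apply.
have fz := fin_num_measure P _ mZ.
rewrite -(fineK fz); congr (_%:E); set z := fine _.
have z0 : 0 <= z by rewrite -lee_fin fineK.
apply/eqP; rewrite eq_le z0 andbT; apply/negP => /negP; rewrite -ltNge => zpos.
have hq : `|1 - p i| < 1.
  have := @p_le1 _ _ _ P X p hX hp0 i => p1.
  by rewrite ger0_norm ?subr_ge0 // ltrBlDr ltrDl.
have h := @cvgr_lt R nat \oo _ (fun n => (1 - p i) ^+ n) 0 (cvg_expr hq) z zpos.
have [N _ hN] := h.
have := bnd N; rewrite -(fineK fz) lee_fin -/z => zle.
have := hN N (leqnn N); rewrite /=; lra.
Qed.

Definition ratn (n : nat) : rat := odflt 0 (unpickle n).

Lemma up_null d (T : measurableType d) (R : realType) (P : probability T R)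
  (X : nat -> T -> nat) (p : nat -> R) (hX : iid_law P X p)
  (hp0 : forall i, 0 <= p i) (f : nat -> R -> R)
  (hmono : forall i a b, a <= b -> f i a <= f i b)
  (hcond : forall L : R, exists i (q : rat), [/\ 0 < p i, ratr q < L & L < f i (ratr q)])
  (x : R) :
  P.-negligible [set w | exists L : R, limn_esup (fun n => (Fn f X n w x)%:E) = L%:E].
Proof.
pose Zc i qn m := if 0 < p i then Zs X f x (ratr (ratn qn)) m i else set0.
apply: (@negligibleS _ _ _ _ (\bigcup_i \bigcup_qn \bigcup_m Zc i qn m)).
  move=> w [L hL].
  have [i [q [pi0 qL Lf]]] := hcond L.
  have [ha hb] := limsup_prop (fun n => Fn f X n w x) L hL.
  have [N0 hN0] := ha _ Lf.
  exists i => //; exists (pickle q) => //; exists N0 => //.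
  rewrite /Zc pi0 /ratn pickleK /= => K _.
  set s := fun k => X k w.
  have hinf : forall N, exists2 n, (N <= n)%N & visit f x (ratr q) N0 s n.
    move=> N; have [n Nn hn] := hb _ qL (maxn N N0).
    exists n; first by exact: leq_trans (leq_maxl _ _) Nn.
    rewrite /visit (leq_trans (leq_maxr _ _) Nn) /= -Fn_Fs; exact: ltW.
  have [n [vn cn]] := cnt_hit f x (ratr q) N0 s hinf K.
  exists n => //; split => // k kn vk hk.
  move: vk; rewrite /visit => /andP[N0k uk].
  have := hN0 k.+1 (leq_trans N0k (leqnSn _)).
  rewrite /= Fn_Fs -/s hk => hlt.
  have := hmono i _ _ uk; lra.
apply: negligible_bigcup => i; apply: negligible_bigcup => qn.
apply: negligible_bigcup => m; rewrite /Zc; case: ifP => hp.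
  have [mZ PZ] := @Zs_null _ _ _ P X p hX hp0 f x (ratr (ratn qn)) m i hp.
  by exists (Zs X f x (ratr (ratn qn)) m i); split.
exact: negligible_set0.
Qed.

Lemma Fn_neg (R : realType) (T : Type) (f : nat -> R -> R) (X : nat -> T -> nat) n w x :
  Fn (fun i y => - f i (- y)) X n w (- x) = - Fn f X n w x.
Proof. by elim: n => //= n ->; rewrite opprK. Qed.

Theorem lemma1 (R : realType) (f : nat -> R -> R) (p : nat -> R)
  (hhomeo : forall i, homeo_plus (f i))
  (hp0 : forall i, 0 <= p i)
  (hp1 : (\sum_(i <oo) (p i)%:E)%E = 1%E)
  (hshift : forall x : R, exists i j : nat,
      [/\ 0 < p i, 0 < p j & f j x < x < f i x])
  (d : measure_display) (T : measurableType d) (P : probability T R)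
  (X : nat -> T -> nat) (hX : iid_law P X p) :
  forall x : R, {ae P, forall w : T,
    (limn_esup (fun n => (Fn f X n w x)%:E) = -oo%E \/
     limn_esup (fun n => (Fn f X n w x)%:E) = +oo%E) /\
    (limn_einf (fun n => (Fn f X n w x)%:E) = -oo%E \/
     limn_einf (fun n => (Fn f X n w x)%:E) = +oo%E)}.
Proof.
move=> x.
have hmonof : forall i a b, a <= b -> f i a <= f i b.
  move=> i a b; rewrite le_eqVlt => /orP[/eqP -> //|ab].
  by have [_ [hlt _]] := hhomeo i; exact: ltW (hlt _ _ ab).
have hcondf : forall L : R, exists i (q : rat), [/\ 0 < p i, ratr q < L & L < f i (ratr q)].
  move=> L; have [i [j [pi pj /andP[_ hi]]]] := hshift L.
  have [q [q1 q2]] := rat_below _ (f i) L L (hhomeo i).1 hi.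
  by exists i, q; split.
pose g := fun i y => - f i (- y).
have hmonog : forall i a b, a <= b -> g i a <= g i b.
  by move=> i a b ab; rewrite /g lerN2; apply: hmonof; rewrite lerN2.
have hcondg : forall L : R, exists i (q : rat), [/\ 0 < p i, ratr q < L & L < g i (ratr q)].
  move=> L; have [i [j [pi pj /andP[hj _]]]] := hshift (- L).
  have [q [q1 q2]] := rat_above _ (f j) (- L) (- L) (hhomeo j).1 hj.
  exists j, (- q); split => //; rewrite rmorphN.
    by rewrite ltrNl.
  by rewrite /g opprK ltrNr.
have N1 := @up_null _ _ _ P X p hX hp0 f hmonof hcondf x.
have N2 := @up_null _ _ _ P X p hX hp0 g hmonog hcondg (- x).
apply: negligibleS (negligibleU N1 N2) => w /= hw.
case E1: (limn_esup (fun n => (Fn f X n w x)%:E)) => [r| |].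
- by left; exists r.
- case E2: (limn_einf (fun n => (Fn f X n w x)%:E)) => [r| |].
  + right; exists (- r).
    rewrite (_ : (fun n => _) = -%E \o (fun n => (Fn f X n w x)%:E)).
      by rewrite limn_esupN E2.
    by apply/funext => n; rewrite /= Fn_neg EFinN.
  + by exfalso; apply: hw; split; [right|right].
  + by exfalso; apply: hw; split; [right|left].
- case E2: (limn_einf (fun n => (Fn f X n w x)%:E)) => [r| |].
  + right; exists (- r).
    rewrite (_ : (fun n => _) = -%E \o (fun n => (Fn f X n w x)%:E)).
      by rewrite limn_esupN E2.
    by apply/funext => n; rewrite /= Fn_neg EFinN.
  + by exfalso; apply: hw; split; [left|right].
  + by exfalso; apply: hw; split; [left|left].
Qed.
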